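(* Let $\Pi=(\mathcal{S},\mathcal{R})$ be a stably (resp. haltingly) correct CRN protocol (with respect to some interface). Then there exist a runtime policy $\varrho$ and a function $f:\mathbb{Z}_{\ge1}\to\mathbb{R}_{\ge0}$ such that for every integer $n\ge1$, every execution $\eta\in\mathcal{F}(n)$ and every skipping policy $\sigma$, the stabilization runtime $\operatorname{RT}_{\mathrm{stab}}^{\varrho,\sigma}(\eta)$ (resp. halting runtime $\operatorname{RT}_{\mathrm{halt}}^{\varrho,\sigma}(\eta)$) is at most $f(n)$.
   Context: Model. A CRN protocol $\Pi=(\mathcal{S},\mathcal{R})$ has a finite species set $\mathcal{S}$ and finite reaction set $\mathcal{R}\subset\mathbb{N}^{\mathcal{S}}\times\mathbb{N}^{\mathcal{S}}$; each reaction $(\mathbf{r},\mathbf{p})$ has $\|\mathbf{r}\|_1\in\{1,2\}$ and $\|\mathbf{r}\|_1\le\|\mathbf{p}\|_1$; for each $\mathbf{r}$ with $1\le\|\mathbf{r}\|_1\le2$ the set $\mathcal{R}(\mathbf{r})$ of reactions with reactants $\mathbf{r}$ is nonempty; void reactions have $\mathbf{r}=\mathbf{p}$, and if $(\mathbf{r},\mathbf{r})\in\mathcal{R}$ then $\mathcal{R}(\mathbf{r})=\{(\mathbf{r},\mathbf{r})\}$; $\operatorname{NV}(\mathcal{R})$ = non-void reactions. Configurations $\mathbf{c}\in\mathbb{N}^{\mathcal{S}}$ with $\|\mathbf{c}\|_1\ge1$; $(\mathbf{r},\mathbf{p})$ is applicable to $\mathbf{c}$ if $\mathbf{r}\le\mathbf{c}$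 and yields $\mathbf{c}-\mathbf{r}+\mathbf{p}$; $\operatorname{app}(\mathbf{c})$ applicable reactions, $\overline{\operatorname{app}}(\mathbf{c})=\mathcal{R}\setminus\operatorname{app}(\mathbf{c})$; $\stackrel{*}{\rightharpoonup}$ reachability; the protocol respects finite density ($\mathbf{c}\stackrel{*}{\rightharpoonup}\mathbf{c}'\Rightarrow\|\mathbf{c}'\|_1\le O(\|\mathbf{c}\|_1)$). $\mathrm{stab}(Z)=\{\mathbf{c}\in Z:\mathbf{c}\stackrel{*}{\rightharpoonup}\mathbf{c}'\Rightarrow\mathbf{c}'\in Z\}$, $\mathrm{halt}(Z)=\{\mathbf{c}\in Z:\mathbf{c}\stackrel{*}{\rightharpoonup}\mathbf{c}'\Rightarrow\mathbf{c}'=\mathbf{c}\}$. Executions $\eta=\langle\mathbf{c}^t,\alpha^t\rangle_{t\ge0}$ ($\alpha^t\in\operatorname{app}(\mathbf{c}^t)$, $\mathbf{c}^{t+1}=\alpha^t(\mathbf{c}^t)$) are weakly fair if for all $t$ and $\alpha\in\operatorname{app}(\mathbf{c}^t)$ there is $t'\ge t$ with $\alpha^{t'}=\alpha$ or $\alpha\notin\operatorname{app}(\mathbf{c}^{t'})$. An interface $\mathcal{I}=(\mathcal{U},\mu,\mathcal{C})$ ($\mu:\mathcal{S}\to\mathcal{U}$, $\mathcal{C}\subseteq\mathbb{N}^{\mathcal{U}}\times\mathbb{N}^{\mathcal{U}}$, $\mu(\mathbf{c})(u)=\sum_{\mu(A)=u}\mathbf{c}(A)$) gives $Z_{\mathcal{I}}(\mathbf{c}^0)=\{\mathbf{c}:(\mu(\mathbf{c}^0),\mu(\mathbf{c}))\in\mathcal{C}\}$;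 $\mathbf{c}^0$ is valid if this is nonempty; $\Pi$ is stably (haltingly) correct if every weakly fair execution from a valid $\mathbf{c}^0$ reaches $\mathrm{stab}(Z_{\mathcal{I}}(\mathbf{c}^0))$ ($\mathrm{halt}(Z_{\mathcal{I}}(\mathbf{c}^0))$); the first such step is the stabilization (halting) step. Stochastic scheduler. With volume $\varphi>0$, the propensity of $\alpha=(\mathbf{r},\mathbf{p})$ in $\mathbf{c}$ is $\pi_{\mathbf{c}}(\alpha)=\mathbf{c}(A)/|\mathcal{R}(\mathbf{r})|$ if $\mathbf{r}=A$; $\frac1\varphi\binom{\mathbf{c}(A)}{2}/|\mathcal{R}(\mathbf{r})|$ if $\mathbf{r}=2A$; $\frac1\varphi\mathbf{c}(A)\mathbf{c}(B)/|\mathcal{R}(\mathbf{r})|$ if $\mathbf{r}=A+B$, $A\ne B$; $\pi_{\mathbf{c}}(Q)=\sum_{\alpha\in Q}\pi_{\mathbf{c}}(\alpha)$, $\pi_{\mathbf{c}}=\pi_{\mathbf{c}}(\mathcal{R})$. A stochastic execution picks $\alpha^t$ with probability $\pi_{\mathbf{c}^t}(\alpha)/\pi_{\mathbf{c}^t}$; step $t$ has time span $1/\pi_{\mathbf{c}^t}$. The volume is $\varphi=\Theta(n)$ with $n$ the initial molecular count. Runtime. For an execution $\eta$, step $t$ and $Q\subseteq\mathcal{R}$, $\tau(\eta,t,Q)$ is the least $s>t$ with $\alpha^{s-1}\in Q$ or $Q\subseteq\bigcup_{t\le t'\le s}\overline{\operatorname{app}}(\mathbf{c}^{t'})$. A runtime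 policy $\varrho$ maps each configuration $\mathbf{c}$ to $\varrho(\mathbf{c})\subseteq\operatorname{NV}(\mathcal{R})$; a skipping policy $\sigma$ maps each step $t$ to $\sigma(t)\ge t$. Rounds of a weakly fair $\eta$: $t(0)=0$, effective step $t_e(i)=\sigma(t(i))$, effective configuration $\mathbf{e}^i=\mathbf{c}^{t_e(i)}$, $t(i+1)=\tau(\eta,t_e(i),\varrho(\mathbf{e}^i))$. Temporal cost: $\operatorname{TC}^{\varrho}(\mathbf{c})=\mathbb{E}\big[\sum_{t=0}^{\tau(\eta_r,0,\varrho(\mathbf{c}))-1}1/\pi_{\mathbf{c}_r^t}\big]$ for a stochastic execution $\eta_r=\langle\mathbf{c}_r^t,\alpha_r^t\rangle$ from $\mathbf{c}$. The runtime of the prefix of $\eta$ before step $t^*$ is $\sum_{i=0}^{i^*-1}\operatorname{TC}^{\varrho}(\mathbf{e}^i)$ with $i^*=\min\{i:t(i)\ge t^*\}$; $\operatorname{RT}_{\mathrm{stab}}^{\varrho,\sigma}(\eta)$ (resp. $\operatorname{RT}_{\mathrm{halt}}^{\varrho,\sigma}(\eta)$) is this with $t^*$ the stabilization (halting) step. $\mathcal{F}(n)$ is the set of weakly fair executions from valid initial configurations of molecular count $n$. *)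

(* Defs.v *)
From HB Require Import structures.
From mathcomp Require Import all_boot all_order all_algebra.
From mathcomp Require Import boolp classical_sets reals ereal topology
  normedtype sequences Rstruct.


Set Implicit Arguments.
Unset Strict Implicit.
Unset Printing Implicit Defensive.
Import Order.TTheory GRing.Theory Num.Theory.

Local Open Scope ring_scope.

Notation R := Rdefinitions.R.

(* Injectivity of (reac,prod) (in [wf_crn]) makes the reactions a set   *)
(* of pairs in N^S x N^S.                                              *)
Record crn := Crn {
  species : finType;
  rxn : finType;
  reac : rxn -> {ffun species -> nat};
  prod : rxn -> {ffun species -> nat}
}.

Definition conf (P : crn) := {ffun species P -> nat}.

Definition csize (P : crn) (c : conf P) : nat := (\sum_(A : species P) c A)%N.

Definition applicable (P : crn) (c : conf P) (a : rxn P) : bool :=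
  [forall A, (reac a A <= c A)%N].

Definition apply_rxn (P : crn) (c : conf P) (a : rxn P) : conf P :=
  [ffun A => (c A - reac a A + prod a A)%N].

Inductive reach (P : crn) : conf P -> conf P -> Prop :=
| reach_refl c : reach c c
| reach_step c a c' : applicable c a -> reach (apply_rxn c a) c' -> reach c c'.

Definition is_void (P : crn) (a : rxn P) : bool := reac a == prod a.

Definition NV (P : crn) : {set rxn P} := [set a | ~~ is_void a].

Definition nreac (P : crn) (r : conf P) : nat := #|[set a : rxn P | reac a == r]|.

Definition wf_crn (P : crn) : Prop :=
  [/\ injective (fun a : rxn P => (reac a, prod a)),
      (forall a : rxn P, (1 <= csize (reac a) <= 2)%N),
      (forall a : rxn P, (csize (reac a) <= csize (prod a))%N),
      (forall r : conf P, (1 <= csize r <= 2)%N -> exists a : rxn P, reac a = r) &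
      (forall a b : rxn P, reac a = prod a -> reac b = reac a -> b = a)].

Definition finite_density (P : crn) : Prop :=
  exists K : nat, forall c c' : conf P, reach c c' -> (csize c' <= K * csize c)%N.

Record exec (P : crn) := Exec { ec : nat -> conf P; ea : nat -> rxn P }.

Definition is_execution (P : crn) (e : exec P) : Prop :=
  forall t, applicable (ec e t) (ea e t) /\ ec e t.+1 = apply_rxn (ec e t) (ea e t).

Definition weakly_fair (P : crn) (e : exec P) : Prop :=
  is_execution e /\
  forall t (a : rxn P), applicable (ec e t) a ->
    exists t', (t <= t')%N /\ (ea e t' = a \/ ~~ applicable (ec e t') a).

Record interface (P : crn) := Interface {
  iU : finType;
  imu : species P -> iU;
  iC : {ffun iU -> nat} -> {ffun iU -> nat} -> Prop
}.

Definition proj (P : crn) (I : interface P) (c : conf P) : {ffun iU I -> nat} :=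
  [ffun u => (\sum_(A | @imu P I A == u) c A)%N].

(* Z_I(c0); configurations have ||c|| >= 1 *)
Definition Zset (P : crn) (I : interface P) (c0 : conf P) (c : conf P) : Prop :=
  (1 <= csize c)%N /\ @iC P I (proj I c0) (proj I c).

Definition valid (P : crn) (I : interface P) (c0 : conf P) : Prop :=
  (1 <= csize c0)%N /\ exists c, Zset I c0 c.

Definition stab (P : crn) (Z : conf P -> Prop) (c : conf P) : Prop :=
  Z c /\ forall c', reach c c' -> Z c'.

Definition halt (P : crn) (Z : conf P -> Prop) (c : conf P) : Prop :=
  Z c /\ forall c', reach c c' -> c' = c.

Definition stably_correct (P : crn) (I : interface P) : Prop :=
  forall e : exec P, weakly_fair e -> valid I (ec e 0) ->
    exists t, stab (Zset I (ec e 0)) (ec e t).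

Definition haltingly_correct (P : crn) (I : interface P) : Prop :=
  forall e : exec P, weakly_fair e -> valid I (ec e 0) ->
    exists t, halt (Zset I (ec e 0)) (ec e t).

Definition first_step (P : crn) (X : conf P -> Prop) (e : exec P) (t : nat) : Prop :=
  X (ec e t) /\ forall t', (t' < t)%N -> ~ X (ec e t').

Definition in_F (P : crn) (I : interface P) (n : nat) (e : exec P) : Prop :=
  weakly_fair e /\ valid I (ec e 0) /\ csize (ec e 0) = n.

(* For ||r||_1 in {1,2}, prod_A binom(c(A), r(A)) equals c(A) if r = A, *)
(* binom(c(A),2) if r = 2A and c(A)c(B) if r = A+B.                     *)
Definition propensity (P : crn) (phi : R) (c : conf P) (a : rxn P) : R :=
  (if csize (reac a) == 1%N then 1 else phi^-1) *
  ((\prod_(A : species P) 'C(c A, reac a A))%N)%:R / (nreac (reac a))%:R.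

Definition total_prop (P : crn) (phi : R) (c : conf P) : R :=
  \sum_(a : rxn P) propensity phi c a.

Definition tau_hit (P : crn) (cs : nat -> conf P) (inQ : nat -> bool)
    (t : nat) (Q : {set rxn P}) (s : nat) : bool :=
  inQ s.-1 ||
  (Q \subset \bigcup_(t <= t' < s.+1) [set a : rxn P | ~~ applicable (cs t') a]).

Definition is_tau (P : crn) (e : exec P) (t : nat) (Q : {set rxn P}) (s : nat) : Prop :=
  let inQ := fun k => ea e k \in Q in
  [/\ (t < s)%N, tau_hit (ec e) inQ t Q s &
      forall s', (t < s' < s)%N -> ~~ tau_hit (ec e) inQ t Q s'].

Fixpoint path_confs (P : crn) (c : conf P) (w : seq (rxn P)) : seq (conf P) :=
  c :: (if w is a :: w' then path_confs (apply_rxn c a) w' else [::]).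

Fixpoint path_prob (P : crn) (phi : R) (c : conf P) (w : seq (rxn P)) : R :=
  if w is a :: w' then
    (if applicable c a then propensity phi c a / total_prop phi c else 0) *
    path_prob phi (apply_rxn c a) w'
  else 1.

(* the event tau(eta_r, 0, Q) > t, t = size w, determined by the prefix *)
Definition alive (P : crn) (c : conf P) (Q : {set rxn P}) (w : seq (rxn P)) : bool :=
  let cs := fun k => nth c (path_confs c w) k in
  let inQ := fun k => if onth w k is Some a then a \in Q else false in
  all (fun s => ~~ tau_hit cs inQ 0 Q s) (iota 1 (size w)).

(* TC^rho(c) = E[ sum_{t < tau(eta_r,0,Q)} 1/pi_{c_r^t} ]
            = sum_t E[ 1{tau > t} / pi_{c_r^t} ]  with Q = rho(c). *)
Definition temporal_cost (P : crn) (phi : R) (Q : {set rxn P}) (c : conf P) : \bar R :=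
  (\sum_(0 <= t <oo)
     ((\sum_(w : t.-tuple (rxn P)) 
        (if alive c Q w
         then path_prob phi c w / total_prop phi (nth c (path_confs c w) t)
         else 0))%:E))%E.

Definition runtime_policy (P : crn) (rho : conf P -> {set rxn P}) : Prop :=
  forall c, rho c \subset NV P.

Definition skipping_policy (sigma : nat -> nat) : Prop :=
  forall t, (t <= sigma t)%N.

Definition is_rounds (P : crn) (rho : conf P -> {set rxn P}) (sigma : nat -> nat)
    (e : exec P) (tr : nat -> nat) : Prop :=
  tr 0 = 0%N /\
  forall i, is_tau e (sigma (tr i)) (rho (ec e (sigma (tr i)))) (tr i.+1).

Definition runtime_le (P : crn) (phi : R) (rho : conf P -> {set rxn P})
    (sigma : nat -> nat) (e : exec P) (tstar : nat) (B : \bar R) : Prop :=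
  forall tr : nat -> nat, is_rounds rho sigma e tr ->
  forall istar : nat,
    (tstar <= tr istar)%N -> (forall i, (i < istar)%N -> (tr i < tstar)%N) ->
    (\sum_(0 <= i < istar)
        temporal_cost phi (rho (ec e (sigma (tr i)))) (ec e (sigma (tr i))) <= B)%E.

Definition volume_linear (vol : nat -> R) : Prop :=
  exists k1 k2 : R, 0 < k1 /\ 0 < k2 /\
    forall n : nat, (1 <= n)%N -> k1 * n%:R <= vol n /\ vol n <= k2 * n%:R.

(* Main.v *)
Require Import Defs.
From HB Require Import structures.
From mathcomp Require Import all_boot all_order all_algebra.
From mathcomp Require Import boolp classical_sets reals ereal topology
  normedtype sequences Rstruct.
From mathcomp Require Import zify ring lra.
From Stdlib Require Import Classical.
Import Order.TTheory GRing.Theory Num.Theory.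
Local Open Scope ring_scope.

Set Implicit Arguments.
Unset Strict Implicit.
Unset Printing Implicit Defensive.

Fixpoint path_ok (P : crn) (c : conf P) (w : seq (rxn P)) : Prop :=
  if w is a :: w' then applicable c a /\ path_ok (apply_rxn c a) w' else True.

Definition runl (P : crn) (c : conf P) (w : seq (rxn P)) : conf P :=
  foldl (@apply_rxn P) c w.

Lemma reach_path (P : crn) (c d : conf P) :
  reach c d -> exists w, path_ok c w /\ runl c w = d.
Proof.
elim=> [c0|c0 a c1 Ha _ [w [Hw Hr]]]; first by exists [::].
by exists (a :: w).
Qed.

Lemma path_reach (P : crn) (c : conf P) w : path_ok c w -> reach c (runl c w).
Proof.
elim: w c => [|a w IH] c /=; first by move=> _; constructor.
by case=> Ha Hw; apply: reach_step Ha _; apply: IH.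
Qed.

Lemma reach_trans (P : crn) (a b c : conf P) : reach a b -> reach b c -> reach a c.
Proof.
elim=> // x r y Hr _ IH H.
by apply: reach_step Hr _; apply: IH.
Qed.

Lemma reach1 (P : crn) (c : conf P) a : applicable c a -> reach c (apply_rxn c a).
Proof. by move=> H; apply: reach_step H _; constructor. Qed.

Lemma path_ok_cat (P : crn) (c : conf P) w1 w2 :
  path_ok c (w1 ++ w2) <-> path_ok c w1 /\ path_ok (runl c w1) w2.
Proof.
elim: w1 c => [|a w IH] c /=; first by split=> // [[]].
rewrite IH; split; [by case=> ? []|by case=> [[? ?] ?]].
Qed.

Lemma runl_cat (P : crn) (c : conf P) w1 w2 :
  runl c (w1 ++ w2) = runl (runl c w1) w2.
Proof. exact: foldl_cat. Qed.

Lemma runl_cons (P : crn) (c : conf P) a w :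
  runl c (a :: w) = runl (apply_rxn c a) w.
Proof. by []. Qed.

Lemma path_ok_nth (P : crn) (c : conf P) w j a0 :
  path_ok c w -> (j < size w)%N -> applicable (runl c (take j w)) (nth a0 w j).
Proof.
elim: w c j => [|a w IH] c [|j] //=; first by case.
by case=> _ Hw Hj; apply: IH.
Qed.

Lemma path_ok_take_reach (P : crn) (c : conf P) w j :
  path_ok c w -> reach (runl c (take j w)) (runl c w).
Proof.
move=> H; rewrite -{2}(cat_take_drop j w) runl_cat.
move: H; rewrite -{1}(cat_take_drop j w) path_ok_cat => -[_ H].
exact: path_reach.
Qed.

Lemma runl_take_succ (P : crn) (c : conf P) w j a0 : (j < size w)%N ->
  runl c (take j.+1 w) = apply_rxn (runl c (take j w)) (nth a0 w j).
Proof. by move=> Hj; rewrite (take_nth a0 Hj) /runl foldl_rcons. Qed.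

Lemma exec_reach (P : crn) (e : exec P) : is_execution e ->
  forall t k, reach (ec e t) (ec e (t + k)).
Proof.
move=> He t; elim=> [|k IH]; first by rewrite addn0; constructor.
apply: reach_trans IH _; rewrite addnS; have [Ha ->] := He (t + k).
exact: reach1.
Qed.

Lemma exec_reach_le (P : crn) (e : exec P) t t' : is_execution e ->
  (t <= t')%N -> reach (ec e t) (ec e t').
Proof. by move=> He /subnKC <-; apply: exec_reach. Qed.

Fixpoint runf (P : crn) (c0 : conf P) (f : nat -> rxn P) (t : nat) : conf P :=
  if t is t'.+1 then apply_rxn (runf c0 f t') (f t') else c0.

Definition perf (P : crn) (e : exec P) (T : nat) (L : seq (rxn P)) (t : nat) : rxn P :=
  if (t < T)%N then ea e t else nth (ea e 0) L ((t - T) %% size L).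

Definition pexec (P : crn) (e : exec P) T L : exec P :=
  Exec (runf (ec e 0) (perf e T L)) (perf e T L).

Lemma pexec_pre (P : crn) (e : exec P) T L t : is_execution e -> (t <= T)%N ->
  runf (ec e 0) (perf e T L) t = ec e t.
Proof.
move=> He; elim: t => [|t IH] Ht //=.
rewrite IH ?(ltnW Ht) // /perf Ht; by have [_ ->] := He t.
Qed.

Lemma runl_take_mod (P : crn) (c : conf P) L m j :
  runl c L = c -> (0 < size L)%N -> (j <= size L)%N ->
  runl c (take ((m * size L + j) %% size L) L) = runl c (take j L).
Proof.
move=> HL Hn Hj; rewrite modnMDl.
have [Hlt|Hge] := ltnP j (size L); first by rewrite modn_small.
have -> : j = size L by apply/eqP; rewrite eqn_leq Hj Hge.
by rewrite modnn take0 take_size HL.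
Qed.

Lemma pexec_post (P : crn) (e : exec P) T L : is_execution e ->
  path_ok (ec e T) L -> runl (ec e T) L = ec e T -> (0 < size L)%N ->
  forall k, runf (ec e 0) (perf e T L) (T + k) = runl (ec e T) (take (k %% size L) L).
Proof.
move=> He Hp HL Hn; elim=> [|k IH].
  by rewrite addn0 mod0n take0 pexec_pre.
rewrite addnS /= IH /perf ltnNge leq_addr /= addKn.
have Hj := ltn_pmod k Hn.
rewrite -(runl_take_succ _ _ Hj).
have -> : (k.+1 %% size L = (k %% size L).+1 %% size L)%N by rewrite -addn1 -modnDml addn1.
have [Hlt|Hge] := ltnP (k %% size L).+1 (size L).
  by rewrite (modn_small Hlt).
have Heq : (k %% size L).+1 = size L by apply/eqP; rewrite eqn_leq Hj Hge.
by rewrite Heq modnn take0 take_size HL.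
Qed.

Definition cover (P : crn) (c : conf P) (a0 : rxn P) (L : seq (rxn P)) (x : rxn P) : Prop :=
  exists j, (j <= size L)%N /\
    (((j < size L)%N /\ nth a0 L j = x) \/ ~~ applicable (runl c (take j L)) x).

Lemma pexec_exec (P : crn) (e : exec P) T L : is_execution e ->
  path_ok (ec e T) L -> runl (ec e T) L = ec e T -> (0 < size L)%N ->
  is_execution (pexec e T L).
Proof.
move=> He Hp HL Hn t; split=> //=.
case: (ltnP t T) => Ht.
  by rewrite pexec_pre ?(ltnW Ht) // /perf Ht; case: (He t).
rewrite -(subnKC Ht) pexec_post // /perf ltnNge leq_addr /= addKn.
by apply: path_ok_nth => //; apply: ltn_pmod.
Qed.

Lemma pexec_fair (P : crn) (e : exec P) T L : is_execution e ->
  path_ok (ec e T) L -> runl (ec e T) L = ec e T -> (0 < size L)%N ->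
  (forall x, cover (ec e T) (ea e 0) L x) ->
  weakly_fair (pexec e T L).
Proof.
move=> He Hp HL Hn Hc; split; first exact: pexec_exec.
move=> t a _; have [j [Hj Hor]] := Hc a.
exists (T + (t * size L + j))%N; split.
  apply: leq_trans (leq_addl _ _); apply: leq_trans (leq_addr _ _).
  by rewrite leq_pmulr.
case: Hor => [[Hjl Hnth]|Hna].
  left; rewrite /= /perf ltnNge leq_addr /= addKn modnMDl modn_small //.
right; rewrite /= pexec_post // runl_take_mod //.
Qed.

Lemma cover_cat (P : crn) (c : conf P) a0 b L x :
  runl c b = c -> cover c a0 b x -> cover c a0 (b ++ L) x.
Proof.
move=> Hb [j [Hj Hor]]; exists j; split.
  by rewrite size_cat (leq_trans Hj) // leq_addr.
case: Hor => [[Hjl Hn]|Hna].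
  left; split; last by rewrite nth_cat Hjl.
  by rewrite size_cat (leq_trans Hjl) ?leq_addr.
by right; rewrite takel_cat.
Qed.

Lemma cover_catr (P : crn) (c : conf P) a0 b L x :
  runl c b = c -> cover c a0 L x -> cover c a0 (b ++ L) x.
Proof.
move=> Hb [j [Hj Hor]]; exists (size b + j)%N; split.
  by rewrite size_cat leq_add2l.
case: Hor => [[Hjl Hn]|Hna].
  left; split; first by rewrite size_cat ltn_add2l.
  by rewrite nth_cat ltnNge leq_addr /= addKn.
right; rewrite take_cat ltnNge leq_addr /= addKn runl_cat Hb //.
Qed.

Definition good (P : crn) (x : rxn P) (c : conf P) : Prop :=
  forall d, reach c d -> reach d c -> applicable d x /\ ~ reach (apply_rxn d x) c.

Lemma block_ex (P : crn) (c : conf P) a0 x : ~ good x c ->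
  exists b, path_ok c b /\ runl c b = c /\ cover c a0 b x.
Proof.
move=> Hg.
have [d Hd] : exists d, ~ (reach c d -> reach d c -> applicable d x /\ ~ reach (apply_rxn d x) c).
  by apply: not_all_ex_not.
have Hcd : reach c d by apply: NNPP => H; apply: Hd => /H.
have Hdc : reach d c by apply: NNPP => H; apply: Hd => _ /H.
have [w1 [Hw1 Hr1]] := reach_path Hcd.
case Happ : (applicable d x).
  have Hr : reach (apply_rxn d x) c.
    by apply: NNPP => H; apply: Hd => _ _; split.
  have [w2 [Hw2 Hr2]] := reach_path Hr.
  exists (w1 ++ x :: w2); split; [|split].
  - by apply/path_ok_cat; rewrite Hr1; split=> //=; split.
  - by rewrite runl_cat Hr1 runl_cons.
  - exists (size w1); split; first by rewrite size_cat leq_addr.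
    by left; rewrite size_cat nth_cat ltnn subnn /= addnS ltnS leq_addr.
have [w2 [Hw2 Hr2]] := reach_path Hdc.
exists (w1 ++ w2); split; [|split].
- by apply/path_ok_cat; rewrite Hr1.
- by rewrite runl_cat Hr1.
- exists (size w1); split; first by rewrite size_cat leq_addr.
  by right; rewrite takel_cat // take_size Hr1 Happ.
Qed.

Lemma blocks_ex (P : crn) (c : conf P) a0 (rs : seq (rxn P)) :
  (forall x, ~ good x c) ->
  exists L, path_ok c L /\ runl c L = c /\ forall x, x \in rs -> cover c a0 L x.
Proof.
move=> Hng; elim: rs => [|x rs [L [HL1 [HL2 HL3]]]].
  by exists [::]; split=> //; split.
have [b [Hb1 [Hb2 Hb3]]] := block_ex a0 (Hng x).
exists (b ++ L); split; [|split].
- by apply/path_ok_cat; rewrite Hb2.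
- by rewrite runl_cat Hb2.
- move=> y; rewrite inE => /orP[/eqP ->|Hy]; first exact: cover_cat.
  by apply: cover_catr => //; apply: HL3.
Qed.

Lemma K1 (P : crn) (I : interface P) (Xf : conf P -> conf P -> Prop)
  (corr : forall e : exec P, weakly_fair e -> valid I (ec e 0) ->
     exists t, Xf (ec e 0) (ec e t))
  (clos : forall c0 d c, Xf c0 d -> reach d c -> Xf c0 c)
  (e : exec P) T :
  weakly_fair e -> valid I (ec e 0) -> ~ Xf (ec e 0) (ec e T) ->
  exists x, good x (ec e T).
Proof.
move=> [He Hf] Hv HX; apply: NNPP => Hng.
have Hng' : forall x, ~ good x (ec e T) by move=> x Hx; apply: Hng; exists x.
have [L [HL1 [HL2 HL3]]] := blocks_ex (ea e 0) (enum (rxn P)) Hng'.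
have HL3' : forall x, cover (ec e T) (ea e 0) L x.
  by move=> x; apply: HL3; rewrite mem_enum.
have Hn : (0 < size L)%N.
  rewrite lt0n; apply/negP => /eqP Hs.
  have [j [Hj Hor]] := HL3' (ea e T).
  move: Hj Hor; rewrite Hs leqn0 => /eqP ->; case=> [[]//|].
  by rewrite take0 /=; case: (He T) => ->.
have Hfair := pexec_fair He HL1 HL2 Hn HL3'.
have [t Ht] := corr (pexec e T L) Hfair Hv.
apply: HX; apply: (clos _ _ _ Ht).
rewrite /=; case: (leqP t T) => Htt.
  by rewrite pexec_pre //; apply: exec_reach_le.
rewrite -(subnKC (ltnW Htt)) pexec_post // -{2}HL2.
exact: path_ok_take_reach.
Qed.

Definition rho (P : crn) (c : conf P) : {set rxn P} :=
  if [pick x | `[< good x c >]] is Some x then [set x] else finset.set0.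

Lemma rho_cases (P : crn) (c : conf P) :
  rho c = finset.set0 \/ exists x, rho c = [set x] /\ good x c.
Proof.
rewrite /rho; case: pickP => [x /asboolP Hx|_]; last by left.
by right; exists x.
Qed.

Lemma rho_good (P : crn) (c : conf P) x : good x c ->
  exists y, rho c = [set y] /\ good y c.
Proof.
rewrite /rho; case: pickP => [y /asboolP Hy|H] Hx; first by exists y.
by move: (H x); rewrite (asboolT Hx).
Qed.

Lemma good_app (P : crn) x (c : conf P) : good x c -> applicable c x.
Proof. by move=> /(_ c (reach_refl _) (reach_refl _)) []. Qed.

Lemma good_NV (P : crn) x (c : conf P) : good x c -> x \in NV P.
Proof.
move=> H; have [Ha Hn] := H c (reach_refl c) (reach_refl c).
rewrite inE; apply/negP => /eqP Hv; apply: Hn.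
have -> : apply_rxn c x = c.
  by apply/ffunP => A; rewrite ffunE -Hv subnK //; apply: (forallP Ha).
exact: reach_refl.
Qed.

Lemma rho_policy (P : crn) : runtime_policy (@rho P).
Proof.
move=> c; case: (rho_cases c) => [->|[x [-> Hx]]]; first exact: finset.sub0set.
by rewrite finset.sub1set; apply: good_NV Hx.
Qed.

Lemma rounds_step (P : crn) rh sigma (e : exec P) tr :
  skipping_policy sigma -> is_rounds rh sigma e tr ->
  forall i, (tr i <= sigma (tr i))%N /\ (sigma (tr i) < tr i.+1)%N.
Proof. by move=> Hs [_ Hr] i; case: (Hr i) => H _ _; split. Qed.

Lemma rounds_le (P : crn) rh sigma (e : exec P) tr :
  skipping_policy sigma -> is_rounds rh sigma e tr ->
  forall i j, (i <= j)%N -> (tr i <= tr j)%N.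
Proof.
move=> Hs Hr i j /subnKC <-; elim: (j - i)%N => [|k IH]; first by rewrite addn0.
rewrite addnS; apply: leq_trans IH _.
have [h1 h2] := rounds_step Hs Hr (i + k).
exact: ltnW (leq_ltn_trans h1 h2).
Qed.

Lemma mem_bigcup_seq (T : finType) (r : seq nat) (F : nat -> {set T}) x :
  (x \in \big[@finset.setU T/finset.set0]_(i <- r) F i) = has (fun i => x \in F i) r.
Proof.
by elim: r => [|i r IH]; rewrite ?big_nil ?big_cons ?finset.in_set0 ?finset.in_setU ?IH.
Qed.

Lemma K2 (P : crn) sigma (e : exec P) tr i j x :
  is_execution e -> skipping_policy sigma ->
  is_rounds (@rho P) sigma e tr -> (i < j)%N ->
  rho (ec e (sigma (tr i))) = [set x] -> good x (ec e (sigma (tr i))) ->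
  ec e (sigma (tr j)) <> ec e (sigma (tr i)).
Proof.
move=> He Hs Hr Hij Hrho Hg Heq.
have [_ Hr'] := Hr; case: (Hr' i) => Hlt Hhit _.
rewrite Hrho in Hhit.
set te := sigma (tr i) in Hlt Hhit Hg Heq.
set s := tr i.+1 in Hlt Hhit.
have Hsj : (s <= sigma (tr j))%N.
  exact: leq_trans (rounds_le Hs Hr Hij) (Hs _).
have Key : forall t, (te <= t)%N -> (t <= sigma (tr j))%N ->
    reach (ec e te) (ec e t) /\ reach (ec e t) (ec e te).
  move=> t h1 h2; split; first exact: exec_reach_le.
  by rewrite -Heq; apply: exec_reach_le.
have Hs0 : (0 < s)%N by apply: leq_ltn_trans Hlt.
case/orP: Hhit => [Hx|Hsub].
  move: Hx; rewrite finset.in_set1 => /eqP Hx.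
  have h1 : (te <= s.-1)%N by rewrite -ltnS prednK.
  have h2 : (s.-1 <= sigma (tr j))%N by apply: leq_trans Hsj; apply: leq_pred.
  have [Hk1 Hk2] := Key _ h1 h2.
  have [_ Hn] := Hg _ Hk1 Hk2; apply: Hn.
  have [_ Hstep] := He s.-1; rewrite -Hx -Hstep prednK //.
  by have [] := Key _ (ltnW Hlt) Hsj.
have := fintype.subsetP Hsub x (finset.set11 x); rewrite mem_bigcup_seq => /hasP [t' Ht' Hx].
move: Ht'; rewrite mem_index_iota => /andP [h1 h2].
have h3 : (t' <= sigma (tr j))%N by apply: leq_trans Hsj; rewrite -ltnS.
have [Hk1 Hk2] := Key _ h1 h3.
have [Happ _] := Hg _ Hk1 Hk2.
by move: Hx; rewrite inE Happ.
Qed.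

Lemma conf_entry_le (P : crn) (c : conf P) A : (c A <= csize c)%N.
Proof. by rewrite /csize (bigD1 A) //= leq_addr. Qed.

Lemma count_rounds (P : crn) (I : interface P) (Xf : conf P -> conf P -> Prop)
  (corr : forall e : exec P, weakly_fair e -> valid I (ec e 0) ->
     exists t, Xf (ec e 0) (ec e t))
  (clos : forall c0 d c, Xf c0 d -> reach d c -> Xf c0 c)
  (e : exec P) sigma tr istar tstar B :
  weakly_fair e -> valid I (ec e 0) ->
  (forall t, csize (ec e t) <= B)%N ->
  skipping_policy sigma -> is_rounds (@rho P) sigma e tr ->
  first_step (Xf (ec e 0)) e tstar ->
  (forall i, i < istar -> tr i < tstar)%N ->
  (istar <= B.+1 ^ #|species P|)%N.
Proof.
move=> Hwf Hv HB Hs Hr [_ Hfs] Hist.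
have He := Hwf.1.
have Hdist : forall i j, (i < j)%N -> (j < istar)%N ->
    ec e (sigma (tr j)) <> ec e (sigma (tr i)).
  move=> i j Hij Hj.
  have Hlt : (sigma (tr i) < tstar)%N.
    have [_ h] := rounds_step Hs Hr i.
    apply: leq_trans h _; apply: leq_trans (rounds_le Hs Hr Hij) _.
    exact: ltnW (Hist _ Hj).
  have [x Hx] := K1 corr clos Hwf Hv (Hfs _ Hlt).
  have [y [Hy1 Hy2]] := rho_good Hx.
  exact: K2 He Hs Hr Hij Hy1 Hy2.
pose g (i : 'I_istar) : {ffun species P -> 'I_B.+1} :=
  [ffun A => inord (ec e (sigma (tr i)) A)].
have ginj : injective g.
  move=> i j Hg.
  have Hc : ec e (sigma (tr i)) = ec e (sigma (tr j)).
    apply/ffunP => A; have := congr1 (fun f : {ffun species P -> 'I_B.+1} => nat_of_ord (f A)) Hg.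
    rewrite /= !ffunE !inordK // ltnS; apply: leq_trans (HB _);
      exact: conf_entry_le.
  apply/eqP; apply: contraT; rewrite neq_ltn => /orP [H|H].
    by exfalso; apply: (Hdist _ _ H (ltn_ord j)); rewrite Hc.
  by exfalso; apply: (Hdist _ _ H (ltn_ord i)); rewrite Hc.
have := leq_card g ginj; by rewrite card_ord card_ffun !card_ord.
Qed.

Definition Nr (P : crn) : R := (#|rxn P|.+1)%:R.
Definition lo (phi : R) : R := (1 + phi)^-1.
Definition hi (phi : R) : R := 1 + phi^-1.
Definition Bc (P : crn) (phi : R) : R := Nr P / lo phi.
Definition pc (P : crn) (phi : R) (s : nat) : R :=
  lo phi / Nr P / (Nr P * hi phi * ((2 ^ s)%N)%:R).

Lemma inv_le (x y : R) : 0 < x -> x <= y -> y^-1 <= x^-1.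
Proof. move=> Hx Hxy; rewrite lef_pV2 // posrE //; exact: lt_le_trans Hxy. Qed.

Lemma Nr_ge1 (P : crn) : 1 <= Nr P. Proof. by rewrite /Nr ler1n. Qed.
Lemma Nr_gt0 (P : crn) : 0 < Nr P. Proof. by rewrite /Nr ltr0n. Qed.
Lemma lo_gt0 phi : 0 < phi -> 0 < lo phi.
Proof. by move=> H; rewrite /lo invr_gt0; lra. Qed.
Lemma lo_lt1 phi : 0 < phi -> lo phi < 1.
Proof. by move=> H; rewrite /lo invf_lt1; lra. Qed.
Lemma lo_le_inv phi : 0 < phi -> lo phi <= phi^-1.
Proof. by move=> H; apply: inv_le => //; lra. Qed.
Lemma hi_ge1 phi : 0 < phi -> 1 <= hi phi.
Proof. by move=> H; rewrite /hi lerDl invr_ge0 ltW. Qed.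
Lemma inv_le_hi phi : 0 < phi -> phi^-1 <= hi phi.
Proof. by move=> H; rewrite /hi lerDr ler01. Qed.
Lemma pow2_ge1 s : 1 <= ((2 ^ s)%N)%:R :> R.
Proof. by rewrite ler1n expn_gt0. Qed.
Lemma Bc_ge0 (P : crn) phi : 0 < phi -> 0 <= Bc P phi.
Proof.
by move=> H; rewrite /Bc divr_ge0 // ?ltW ?Nr_gt0 ?lo_gt0.
Qed.

Lemma pc_gt0 (P : crn) phi s : 0 < phi -> 0 < pc P phi s.
Proof.
move=> H; have := lo_gt0 H; have := Nr_gt0 P; have := hi_ge1 H;
  have := pow2_ge1 s => h1 h2 h3 h4.
rewrite /pc !divr_gt0 // !mulr_gt0 //; lra.
Qed.

Lemma div_le_self (x y : R) : 0 <= x -> 1 <= y -> x / y <= x.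
Proof.
move=> Hx Hy; rewrite ler_pdivrMr; last by lra.
by nra.
Qed.

Lemma pc_lt1 (P : crn) phi s : 0 < phi -> pc P phi s < 1.
Proof.
move=> H; have h1 := lo_gt0 H; have h2 := Nr_ge1 P; have h3 := hi_ge1 H;
  have h4 := pow2_ge1 s; have h5 := lo_lt1 H.
apply: le_lt_trans h5; rewrite /pc.
apply: le_trans (div_le_self _ _) (div_le_self _ _) => //; try lra.
- by apply: divr_ge0; lra.
- have h6 : 1 <= Nr P * hi phi by nra.
  by nra.
Qed.

Definition fac (P : crn) (phi : R) (a : rxn P) : R :=
  if csize (reac a) == 1%N then 1 else phi^-1.

Lemma prop_eq (P : crn) phi (c : conf P) a : propensity phi c a =
  fac phi a * ((\prod_(A : species P) 'C(c A, reac a A))%N)%:R / (nreac (reac a))%:R.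
Proof. by []. Qed.

Lemma fac_lo (P : crn) phi (a : rxn P) : 0 < phi -> lo phi <= fac phi a.
Proof.
by move=> H; rewrite /fac; case: ifP => _; [apply/ltW/lo_lt1|apply: lo_le_inv].
Qed.

Lemma fac_hi (P : crn) phi (a : rxn P) : 0 < phi -> fac phi a <= hi phi.
Proof. by move=> H; rewrite /fac; case: ifP => _; [apply: hi_ge1|apply: inv_le_hi]. Qed.

Lemma fac_ge0 (P : crn) phi (a : rxn P) : 0 < phi -> 0 <= fac phi a.
Proof. by move=> H; apply: le_trans (fac_lo a H); apply/ltW/lo_gt0. Qed.

Lemma prop_ge0 (P : crn) phi (c : conf P) a : 0 < phi -> 0 <= propensity phi c a.
Proof.
by move=> H; rewrite prop_eq; apply: divr_ge0 => //; apply: mulr_ge0 => //; apply: fac_ge0.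
Qed.

Lemma prop_inapp (P : crn) phi (c : conf P) a :
  ~~ applicable c a -> propensity phi c a = 0.
Proof.
move=> /forallPn [A HA]; rewrite -ltnNge in HA.
by rewrite prop_eq (bigD1 A) //= bin_small // mul0n mulr0 mul0r.
Qed.

Lemma prop_lb (P : crn) phi (c : conf P) a : 0 < phi -> applicable c a ->
  lo phi / Nr P <= propensity phi c a.
Proof.
move=> Hphi Ha; rewrite prop_eq.
have Hprod : (0 < \prod_(A : species P) 'C(c A, reac a A))%N.
  by apply: prodn_gt0 => A; rewrite bin_gt0; apply: (forallP Ha).
have Hnr1 : (0 < nreac (reac a))%N by apply/card_gt0P; exists a; rewrite inE.
have Hnr2 : (nreac (reac a) <= #|rxn P|)%N by apply: max_card.
move: Hprod Hnr1 Hnr2.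
set X := (\prod_(A : species P) _)%N; set m := nreac _ => Hprod Hnr1 Hnr2.
have HX : 1 <= X%:R :> R by rewrite ler1n.
have Hm1 : 0 < m%:R :> R by rewrite ltr0n.
have Hm2 : m%:R <= Nr P by rewrite /Nr ler_nat ltnW // ltnS.
have Hf := fac_lo a Hphi; have Hl := lo_gt0 Hphi; have Hf0 := fac_ge0 a Hphi.
apply: (@le_trans _ _ (fac phi a / m%:R)).
  apply: ler_pM => //; [exact: ltW|by rewrite invr_ge0 ltW // Nr_gt0|exact: inv_le].
apply: ler_pM; [exact: Hf0|by rewrite invr_ge0 ler0n|nra|exact: lexx].
Qed.

Lemma bin_le_pow2 n k : ('C(n, k) <= 2 ^ n)%N.
Proof.
elim: n k => [|n IH] [|k] //; first by rewrite bin0 expn_gt0.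
by rewrite binS expnS mul2n -addnn leq_add.
Qed.

Lemma prop_ub (P : crn) phi (c : conf P) a : 0 < phi ->
  propensity phi c a <= hi phi * ((2 ^ csize c)%N)%:R.
Proof.
move=> Hphi; rewrite prop_eq.
have HX : ((\prod_(A : species P) 'C(c A, reac a A)) <= 2 ^ csize c)%N.
  rewrite /csize expn_sum; apply: leq_prod => A _; exact: bin_le_pow2.
have Hf0 := fac_ge0 a Hphi.
apply: (@le_trans _ _ (fac phi a * ((\prod_(A : species P) 'C(c A, reac a A))%N)%:R)).
  case: (posnP (nreac (reac a))) => [->|Hm]; first by rewrite invr0 mulr0 mulr_ge0.
  by apply: div_le_self; [apply: mulr_ge0|rewrite ler1n].
apply: ler_pM => //; first exact: fac_hi.
by rewrite ler_nat.
Qed.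

Lemma total_ge0 (P : crn) phi (c : conf P) : 0 < phi -> 0 <= total_prop phi c.
Proof. by move=> H; apply: sumr_ge0 => a _; apply: prop_ge0. Qed.

Lemma total_ge_prop (P : crn) phi (c : conf P) a : 0 < phi ->
  propensity phi c a <= total_prop phi c.
Proof.
move=> H; rewrite /total_prop (bigD1 a) //= lerDl.
by apply: sumr_ge0 => b _; apply: prop_ge0.
Qed.

Lemma total_ub (P : crn) phi (c : conf P) : 0 < phi ->
  total_prop phi c <= Nr P * hi phi * ((2 ^ csize c)%N)%:R.
Proof.
move=> H; rewrite /total_prop.
apply: le_trans (ler_sum _ (fun a _ => prop_ub c a H)) _.
have Hh : 0 <= hi phi by apply: le_trans (hi_ge1 H).
rewrite sumr_const -[_ *+ _]mulr_natl mulrA.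
apply: ler_pM; [|by rewrite ler0n| |exact: lexx].
  by apply: mulr_ge0; rewrite ?ler0n.
apply: ler_pM; [by rewrite ler0n|exact: Hh| |exact: lexx].
by rewrite /Nr ler_nat leqnSn.
Qed.

Lemma inv_total_le (P : crn) phi (c : conf P) : 0 < phi ->
  (total_prop phi c)^-1 <= Bc P phi.
Proof.
move=> H; case: (boolP [exists a, applicable c a]) => [/existsP [a Ha]|Hn].
  have H1 := prop_lb H Ha; have H2 := total_ge_prop c a H.
  have Hpos : 0 < lo phi / Nr P by rewrite divr_gt0 ?lo_gt0 ?Nr_gt0.
  by apply: le_trans (inv_le Hpos (le_trans H1 H2)) _; rewrite /Bc invf_div.
have -> : total_prop phi c = 0.
  rewrite /total_prop big1 // => a _; apply: prop_inapp.
  by move/existsPn: Hn; apply.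
by rewrite invr0 Bc_ge0.
Qed.

Definition rr (P : crn) phi (c : conf P) a : R :=
  if applicable c a then propensity phi c a / total_prop phi c else 0.

Lemma rr_ge0 (P : crn) phi (c : conf P) a : 0 < phi -> 0 <= rr phi c a.
Proof.
move=> H; rewrite /rr; case: ifP => // _.
by apply: divr_ge0; [apply: prop_ge0|apply: total_ge0].
Qed.

Lemma sum_rr_le1 (P : crn) phi (c : conf P) : 0 < phi ->
  \sum_(a : rxn P) rr phi c a <= 1.
Proof.
move=> H; apply: (@le_trans _ _ (\sum_(a : rxn P) propensity phi c a / total_prop phi c)).
  apply: ler_sum => a _; rewrite /rr; case: ifP => // _.
  by apply: divr_ge0; [apply: prop_ge0|apply: total_ge0].
rewrite -mulr_suml -/(total_prop phi c).
have [->|Hn] := eqVneq (total_prop phi c) 0; first by rewrite mul0r ler01.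
by rewrite divff.
Qed.

Lemma rr_lb (P : crn) phi (c : conf P) x s : 0 < phi -> applicable c x ->
  (csize c <= s)%N -> pc P phi s <= rr phi c x.
Proof.
move=> H Hx Hs; rewrite /rr Hx /pc.
have H1 := prop_lb H Hx; have H2 := total_ge_prop c x H.
have Hpos : 0 < lo phi / Nr P by rewrite divr_gt0 ?lo_gt0 ?Nr_gt0.
have Ht : 0 < total_prop phi c by apply: lt_le_trans Hpos (le_trans H1 H2).
have H3 : total_prop phi c <= Nr P * hi phi * ((2 ^ s)%N)%:R.
  apply: le_trans (total_ub c H) _; apply: ler_pM => //.
    by apply: mulr_ge0; [apply/ltW/Nr_gt0|apply: le_trans (hi_ge1 H)].
  by rewrite ler_nat leq_pexp2l.
apply: ler_pM => //; first exact: ltW.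
  by rewrite invr_ge0; apply: le_trans (ltW Ht) H3.
exact: inv_le.
Qed.

Lemma sum_tuple_cons (T : finType) n (F : n.+1.-tuple T -> R) :
  \sum_(w : n.+1.-tuple T) F w = \sum_(a : T) \sum_(w : n.-tuple T) F [tuple of a :: w].
Proof.
rewrite pair_big /=.
rewrite (reindex (fun p : T * n.-tuple T => [tuple of p.1 :: p.2])) /=.
  by apply: eq_bigr => -[a w].
exists (fun w : n.+1.-tuple T => (thead w, [tuple of behead w])) => [[a w] _|w _] /=.
  by rewrite theadE; congr pair; apply: val_inj.
by rewrite -tuple_eta.
Qed.

Lemma size_path_confs (P : crn) (c : conf P) w : size (path_confs c w) = (size w).+1.
Proof. by elim: w c => [|a w IH] c //=; rewrite IH. Qed.

Lemma alive_cons (P : crn) (c : conf P) Q a w :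
  alive c Q (a :: w) ->
  [&& a \notin Q, ~~ (Q \subset [set b | ~~ applicable c b]) &
      alive (apply_rxn c a) Q w].
Proof.
rewrite /alive /= => /andP [H1 H2].
move: H1; rewrite /tau_hit /= negb_or => /andP [Ha Hsub].
rewrite Ha /=; apply/andP; split.
  apply: contra Hsub => Hs; apply: (fintype.subset_trans Hs).
  apply/fintype.subsetP => b Hb; rewrite mem_bigcup_seq; apply/hasP.
  by exists 0%N.
apply/allP => s Hs.
have Hs2 : s.+1 \in iota 2 (size w).
  by move: Hs; rewrite !mem_iota.
move: (allP H2 _ Hs2); apply: contra.
move: Hs; rewrite mem_iota => /andP [Hs1 Hs3]; clear Hs2.
case: s Hs1 Hs3 => [//|s] _ Hs3.
rewrite /tau_hit => /orP [H|H]; apply/orP; [by left|right].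
apply: fintype.subset_trans H _.
apply/fintype.subsetP => b; rewrite !mem_bigcup_seq => /hasP [t' Ht' Hb].
apply/hasP; exists t'.+1.
  by move: Ht'; rewrite !mem_index_iota.
move: Hb; rewrite !inE /=.
rewrite (set_nth_default (apply_rxn c a)) // size_path_confs.
move: Ht'; rewrite mem_index_iota => /andP [_ h].
apply: leq_trans h _; rewrite ltnS; move: Hs3; rewrite add1n ltnS.
done.
Qed.

Definition Ac (P : crn) phi (c : conf P) (Q : {set rxn P}) t : R :=
  \sum_(w : t.-tuple (rxn P)) (if alive c Q w then path_prob phi c w else 0).

Lemma pp_ge0 (P : crn) phi (c : conf P) w : 0 < phi -> 0 <= path_prob phi c w.
Proof.
move=> H; elim: w c => [|a w IH] c /=; first exact: ler01.
apply: mulr_ge0 => //; case: ifP => // _.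
by apply: divr_ge0; [apply: prop_ge0|apply: total_ge0].
Qed.

Lemma Ac_0 (P : crn) phi (c : conf P) Q : Ac phi c Q 0 <= 1.
Proof.
rewrite /Ac; apply: (@le_trans _ _ (\sum_(w : 0.-tuple (rxn P)) 1)).
  apply: ler_sum => -[[|a w] //= _]; case: ifP => _ //; exact: ler01.
by rewrite sumr_const card_tuple expn0.
Qed.

Lemma Ac_succ (P : crn) phi (c : conf P) Q t : 0 < phi ->
  Ac phi c Q t.+1 <= \sum_(a : rxn P)
    (if (a \notin Q) && ~~ (Q \subset [set b | ~~ applicable c b])
     then rr phi c a * Ac phi (apply_rxn c a) Q t else 0).
Proof.
move=> H; rewrite /Ac sum_tuple_cons; apply: ler_sum => a _.
case Hcond : ((a \notin Q) && ~~ (Q \subset [set b | ~~ applicable c b])).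
  rewrite mulr_sumr; apply: ler_sum => w _.
  case Hal : (alive c Q (a :: w)).
    have /and3P [_ _ ->] := alive_cons Hal.
    by rewrite /rr.
  apply: mulr_ge0; first exact: rr_ge0.
  by case: ifP => // _; apply: pp_ge0.
rewrite big1 // => w _.
case Hal : (alive c Q (a :: w)) => //.
by have /and3P [h1 h2 _] := alive_cons Hal; rewrite h1 h2 in Hcond.
Qed.

Lemma Ac_bound (P : crn) phi (c0 : conf P) Q s : 0 < phi ->
  (forall d, reach c0 d -> (csize d <= s)%N) ->
  (Q = finset.set0 \/ exists x, Q = [set x]) ->
  forall t c, reach c0 c -> Ac phi c Q t <= (1 - pc P phi s) ^+ t.
Proof.
move=> H Hs HQ.
have Hp := pc_gt0 P s H; have Hp1 := pc_lt1 P s H.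
have Hq : 0 <= 1 - pc P phi s by lra.
case: HQ => [->|[x ->]].
  elim=> [|t IH] c Hc; first by rewrite expr0 Ac_0.
  apply: le_trans (Ac_succ _ _ _ H) _.
  by rewrite big1 ?exprn_ge0 // => a _; rewrite finset.sub0set andbF.
elim=> [|t IH] c Hc; first by rewrite expr0 Ac_0.
apply: le_trans (Ac_succ _ _ _ H) _.
case Hx : (applicable c x); last first.
  rewrite big1 ?exprn_ge0 // => a _.
  by rewrite finset.sub1set !inE Hx /= andbF.
rewrite finset.sub1set !inE Hx /=.
apply: (@le_trans _ _ (\sum_(a : rxn P)
   (if a \notin [set x] then rr phi c a * (1 - pc P phi s) ^+ t else 0))).
  apply: ler_sum => a _; case: (a \notin [set x]) => //=.
  rewrite /rr; case Ha : (applicable c a); last by rewrite !mul0r.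
  apply: ler_pM => //.
  - by apply: divr_ge0; [apply: prop_ge0|apply: total_ge0].
  - by rewrite /Ac; apply: sumr_ge0 => w _; case: ifP => // _; apply: pp_ge0.
  - apply: IH; apply: reach_trans Hc _; exact: reach1.
rewrite -big_mkcond /= -mulr_suml exprSr mulrC.
apply: ler_pM; [exact: exprn_ge0|by apply: sumr_ge0 => a _; apply: rr_ge0|exact: lexx|].
have Hsum := sum_rr_le1 c H.
rewrite (bigD1 x) //= in Hsum.
have Hrx := rr_lb H Hx (Hs _ Hc).
have -> : \sum_(a | a \notin [set x]) rr phi c a = \sum_(a | a != x) rr phi c a.
  by apply: eq_bigl => a; rewrite finset.in_set1.
lra.
Qed.

Lemma TC_bound (P : crn) phi (c : conf P) s Q : 0 < phi ->
  (forall d, reach c d -> (csize d <= s)%N) ->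
  (Q = finset.set0 \/ exists x, Q = [set x]) ->
  (temporal_cost phi Q c <= (Bc P phi / pc P phi s)%:E)%E.
Proof.
move=> H Hs HQ; rewrite /temporal_cost.
have Hp := pc_gt0 P s H; have Hp1 := pc_lt1 P s H.
have HB := Bc_ge0 P H.
set S := fun t : nat => \sum_(w : t.-tuple (rxn P))
  (if alive c Q w then path_prob phi c w / total_prop phi (nth c (path_confs c w) t)
   else 0).
have HS0 : forall t, 0 <= S t.
  move=> t; apply: sumr_ge0 => w _; case: ifP => // _.
  by apply: divr_ge0; [apply: pp_ge0|apply: total_ge0].
have HSB : forall t, S t <= Bc P phi * (1 - pc P phi s) ^+ t.
  move=> t; apply: (@le_trans _ _ (Bc P phi * Ac phi c Q t)).
    rewrite /Ac mulr_sumr; apply: ler_sum => w _; case: ifP => _.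
      rewrite mulrC; apply: ler_pM; [|apply: pp_ge0 H|apply: inv_total_le H|exact: lexx].
      by rewrite invr_ge0; apply: total_ge0.
    by rewrite mulr0.
  apply: ler_pM => //.
    by rewrite /Ac; apply: sumr_ge0 => w _; case: ifP => // _; apply: pp_ge0.
  exact: (Ac_bound H Hs HQ t (reach_refl c)).
apply: lime_le.
  by apply: is_cvg_ereal_nneg_natsum => n _; rewrite lee_fin; exact: (HS0 n).
apply: nearW => n.
rewrite sumEFin lee_fin.
apply: (@le_trans _ _ (series (geometric (Bc P phi) (1 - pc P phi s)) n)).
  rewrite /series /geometric /=; apply: ler_sum => i _; exact: HSB.
have -> : Bc P phi / pc P phi s = Bc P phi * (1 - (1 - pc P phi s))^-1.
  by congr (_ * _^-1); lra.
apply: geometric_le_lim => //; first lra.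
rewrite ger0_norm; lra.
Qed.

Lemma main_gen (P : crn) (I : interface P) (vol : nat -> R)
  (Xf : conf P -> conf P -> Prop) :
  finite_density P -> volume_linear vol ->
  (forall e : exec P, weakly_fair e -> valid I (ec e 0) ->
     exists t, Xf (ec e 0) (ec e t)) ->
  (forall c0 d c, Xf c0 d -> reach d c -> Xf c0 c) ->
  exists (rh : conf P -> {set rxn P}) (f : nat -> R),
    runtime_policy rh /\ (forall n, (1 <= n)%N -> 0 <= f n) /\
    forall n : nat, (1 <= n)%N ->
    forall e : exec P, in_F I n e ->
    forall sigma : nat -> nat, skipping_policy sigma ->
    forall tstar, first_step (Xf (ec e 0)) e tstar ->
      runtime_le (vol n) rh sigma e tstar (f n)%:E.
Proof.
move=> [Kd HKd] [k1 [k2 [Hk1 [Hk2 Hvol]]]] corr clos.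
have Hphi : forall n, (1 <= n)%N -> 0 < vol n.
  move=> n Hn; have [h _] := Hvol n Hn; apply: lt_le_trans h.
  by apply: mulr_gt0 => //; rewrite ltr0n.
pose C n := Bc P (vol n) / pc P (vol n) (Kd * (Kd * n)).
exists (@rho P), (fun n => (((Kd * n).+1 ^ #|species P|)%N)%:R * C n).
split; first exact: rho_policy.
have HC : forall n, (1 <= n)%N -> 0 <= C n.
  move=> n Hn; rewrite /C; apply: divr_ge0; first by apply: Bc_ge0; exact: Hphi.
  by apply/ltW/pc_gt0; exact: Hphi.
split; first by move=> n Hn; apply: mulr_ge0; [rewrite ler0n|apply: HC].
move=> n Hn e [Hwf [Hv Hsz]] sigma Hs tstar Hfs tr Hr istar Hge Hlt.
have He := Hwf.1.
have HB : forall t, (csize (ec e t) <= Kd * n)%N.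
  by move=> t; rewrite -Hsz; apply: HKd; apply: exec_reach_le.
have Hist := count_rounds corr clos Hwf Hv HB Hs Hr Hfs Hlt.
apply: (@le_trans _ _ (\sum_(0 <= i < istar) (C n)%:E)%E).
  apply: lee_sum => i _.
  apply: TC_bound; first exact: Hphi.
    move=> d Hd; apply: leq_trans (HKd _ _ Hd) _.
    by rewrite leq_mul2l HB orbT.
  by case: (rho_cases (ec e (sigma (tr i)))) => [->|[x [-> _]]]; [left|right; exists x].
rewrite sumEFin lee_fin sumr_const_nat subn0 -[C n *+ _]mulr_natl.
by apply: ler_pM; [rewrite ler0n|exact: HC|rewrite ler_nat|exact: lexx].
Qed.

Theorem lemma4p2 (P : crn) (I : interface P) (vol : nat -> R) :
  wf_crn P -> finite_density P -> volume_linear vol ->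
  (stably_correct I ->
     exists (rho : conf P -> {set rxn P}) (f : nat -> R),
       runtime_policy rho /\ (forall n, (1 <= n)%N -> 0 <= f n) /\
       forall n : nat, (1 <= n)%N ->
       forall e : exec P, in_F I n e ->
       forall sigma : nat -> nat, skipping_policy sigma ->
       forall tstar, first_step (stab (Zset I (ec e 0))) e tstar ->
         runtime_le (vol n) rho sigma e tstar (f n)%:E)
  /\
  (haltingly_correct I ->
     exists (rho : conf P -> {set rxn P}) (f : nat -> R),
       runtime_policy rho /\ (forall n, (1 <= n)%N -> 0 <= f n) /\
       forall n : nat, (1 <= n)%N ->
       forall e : exec P, in_F I n e ->
       forall sigma : nat -> nat, skipping_policy sigma ->
       forall tstar, first_step (halt (Zset I (ec e 0))) e tstar ->
         runtime_le (vol n) rho sigma e tstar (f n)%:E).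
Proof.
move=> _ Hfd Hvol; split=> Hcorr.
  apply: (@main_gen P I vol (fun c0 => stab (Zset I c0))) => //.
  move=> c0 d c [Zd Hd] Hdc; split; first exact: Hd.
  by move=> c' Hcc'; apply: Hd; apply: reach_trans Hdc Hcc'.
apply: (@main_gen P I vol (fun c0 => halt (Zset I c0))) => //.
by move=> c0 d c [Zd Hd] Hdc; rewrite (Hd _ Hdc).
Qed.
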